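(* Let $\lambda_1,\lambda_2,\lambda_1',\lambda_2',\sigma_1,\sigma_2,\sigma_1',\sigma_2'\in\mathbb{C}^*$ and $\eta_1,\eta_2,\eta_1',\eta_2'\in\mathbb{C}$ with $\lambda_1\neq\lambda_2$ and $\lambda_1'\neq\lambda_2'$. Then the irreducible $\mathcal{G}$-modules $\Omega(\lambda_1,\eta_1,\sigma_1,0)\otimes\Omega(\lambda_2,\eta_2,0,\sigma_2)$ and $\Omega(\lambda_1',\eta_1',\sigma_1',0)\otimes\Omega(\lambda_2',\eta_2',0,\sigma_2')$ are isomorphic if and only if $(\lambda_1,\eta_1,\sigma_1)=(\lambda_1',\eta_1',\sigma_1')$ and $(\lambda_2,\eta_2,\sigma_2)=(\lambda_2',\eta_2',\sigma_2')$.
   Context: The planar Galilean conformal algebra $\mathcal{G}$ is the complex Lie algebra with basis $\{L_m,H_m,I_m,J_m\mid m\in\mathbb{Z}\}$ and brackets $[L_m,L_n]=(n-m)L_{m+n}$, $[L_m,H_n]=nH_{m+n}$, $[L_m,I_n]=(n-m)I_{m+n}$, $[L_m,J_n]=(n-m)J_{m+n}$, $[H_m,I_n]=I_{m+n}$, $[H_m,J_n]=-J_{m+n}$, and $[H_m,H_n]=[I_m,I_n]=[J_m,J_n]=[I_m,J_n]=0$ for all $m,n\in\mathbb{Z}$. For $\lambda,\sigma\in\mathbb{C}^*$, $\eta\in\mathbb{C}$, the module $\Omega(\lambda,\eta,\sigma,0)$ is $\mathbb{C}[X,Y]$ with $L_m f(X,Y)=\lambda^m(Y-mX+m\eta)f(X,Y-m)$,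 $H_m f(X,Y)=\lambda^m X f(X,Y-m)$, $I_m f(X,Y)=\lambda^m\sigma f(X-1,Y-m)$, $J_m f(X,Y)=0$. The module $\Omega(\lambda,\eta,0,\sigma)$ is $\mathbb{C}[S,T]$ with $L_m f(S,T)=\lambda^m(T+mS+m\eta)f(S,T-m)$, $H_m f(S,T)=\lambda^m S f(S,T-m)$, $I_m f(S,T)=0$, $J_m f(S,T)=\lambda^m\sigma f(S+1,T-m)$. The tensor product of $\mathcal{G}$-modules has action $x(v\otimes w)=xv\otimes w+v\otimes xw$. (When $\lambda_1\neq\lambda_2$ these tensor products are irreducible.) *)

(* Defs.v *)
From HB Require Import structures.
From mathcomp Require Import all_boot all_order all_algebra.
From mathcomp Require Import mpoly.
Set Implicit Arguments. Unset Strict Implicit. Unset Printing Implicit Defensive.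
Import Order.TTheory GRing.Theory Num.Theory.
Local Open Scope ring_scope.

(* A linear map between G-modules is a
   module homomorphism iff it commutes with the action of every basis
   element, so the action is specified on the basis. *)
Inductive gca_basis : Type :=
| gL of int | gH of int | gI of int | gJ of int.

Section TensorModule.
Variable C : numClosedFieldType.

(* C[X,Y] (x) C[S,T] is identified with C[X,Y,S,T] = {mpoly C[4]} via
   f(X,Y) (x) g(S,T) |-> f(X,Y) g(S,T).
   Variables: X = 'X_0, Y = 'X_1, S = 'X_2, T = 'X_3. *)
Definition Pol := {mpoly C[4]}.
Definition vX : Pol := 'X_(inord 0).
Definition vY : Pol := 'X_(inord 1).
Definition vS : Pol := 'X_(inord 2).
Definition vT : Pol := 'X_(inord 3).

Definition shift4 (a b c d : C) (f : Pol) : Pol :=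
  comp_mpoly [tuple vX + a%:MP; vY + b%:MP; vS + c%:MP; vT + d%:MP] f.

(* Action of the basis elements on
   Omega(l1,e1,s1,0) (x) Omega(l2,e2,0,s2), using
   x (v (x) w) = x v (x) w + v (x) x w. *)
Definition tens_act (l1 e1 s1 l2 e2 s2 : C) (g : gca_basis) (f : Pol) : Pol :=
  match g with
  | gL m =>
      (l1 ^ m) *: ((vY - (m%:~R) *: vX + (m%:~R * e1)%:MP) * shift4 0 (- m%:~R) 0 0 f)
    + (l2 ^ m) *: ((vT + (m%:~R) *: vS + (m%:~R * e2)%:MP) * shift4 0 0 0 (- m%:~R) f)
  | gH m =>
      (l1 ^ m) *: (vX * shift4 0 (- m%:~R) 0 0 f)
    + (l2 ^ m) *: (vS * shift4 0 0 0 (- m%:~R) f)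
  | gI m =>
      (l1 ^ m * s1) *: shift4 (-1) (- m%:~R) 0 0 f + 0
  | gJ m =>
      0 + (l2 ^ m * s2) *: shift4 0 0 1 (- m%:~R) f
  end.

Definition gmod_iso (act1 act2 : gca_basis -> Pol -> Pol) : Prop :=
  exists phi : Pol -> Pol,
    [/\ (forall (a : C) (u v : Pol), phi (a *: u + v) = a *: phi u + phi v),
        bijective phi &
        (forall (g : gca_basis) (v : Pol), phi (act1 g v) = act2 g (phi v))].

End TensorModule.

(* Main.v *)
Require Import Defs.
From HB Require Import structures.
From mathcomp Require Import all_boot all_order all_algebra.
From mathcomp Require Import mpoly.
From mathcomp Require Import ring zify.
Import Order.TTheory GRing.Theory Num.Theory.
Local Open Scope ring_scope.

Section Aux.
Variable C : numClosedFieldType.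
Local Notation P := {mpoly C[4]}.

Lemma ord4_cases (i : 'I_4) :
  [\/ i = inord 0, i = inord 1, i = inord 2 | i = inord 3].
Proof.
case: i => [[|[|[|[|//]]]] Hi].
- by constructor 1; apply: val_inj; rewrite /= inordK.
- by constructor 2; apply: val_inj; rewrite /= inordK.
- by constructor 3; apply: val_inj; rewrite /= inordK.
- by constructor 4; apply: val_inj; rewrite /= inordK.
Qed.

Definition stup (a b c d : C) : 4.-tuple P :=
  [tuple (@vX C) + a%:MP; (@vY C) + b%:MP; (@vS C) + c%:MP; (@vT C) + d%:MP].

Lemma stup_tnth (a b c d : C) (i : 'I_4) :
  exists k, tnth (stup a b c d) i = 'X_i + k%:MP.
Proof.
case: (ord4_cases i) => ->.
- by exists a; rewrite /stup (tnth_nth 0) inordK.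
- by exists b; rewrite /stup (tnth_nth 0) inordK.
- by exists c; rewrite /stup (tnth_nth 0) inordK.
- by exists d; rewrite /stup (tnth_nth 0) inordK.
Qed.

Lemma shift4E (a b c d : C) (f : P) : shift4 a b c d f = f \mPo stup a b c d.
Proof. by []. Qed.

Lemma comp_mpoly_comp (p : P) (lq lr : 4.-tuple P) :
  (p \mPo lq) \mPo lr = p \mPo [tuple (tnth lq i) \mPo lr | i < 4].
Proof.
rewrite (comp_mpolyEX p lq) (comp_mpolyEX p) raddf_sum /=.
apply: eq_bigr => m _; rewrite comp_mpolyZ; congr (_ *: _).
rewrite !comp_mpolyX rmorph_prod; apply: eq_bigr => i _.
by rewrite rmorphXn tnth_map tnth_ord_tuple.
Qed.

Lemma shift4_comp (a b c d a' b' c' d' : C) (f : P) :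
  shift4 a b c d (shift4 a' b' c' d' f) =
  shift4 (a + a') (b + b') (c + c') (d + d') f.
Proof.
rewrite !shift4E comp_mpoly_comp; congr (_ \mPo _).
apply: eq_from_tnth => i; rewrite tnth_map tnth_ord_tuple.
have H (x : 'I_4) (u : C) : ('X_x + u%:MP : P) \mPo stup a b c d =
   tnth (stup a b c d) x + u%:MP.
  by rewrite comp_mpolyD comp_mpolyC comp_mpolyXU -tnth_nth.
case: (ord4_cases i) => ->; rewrite [X in X \mPo _](tnth_nth 0) inordK //=;
 rewrite H /stup [in RHS](tnth_nth 0) inordK //= ?rmorphD addrA.
 all: by rewrite (tnth_nth 0) inordK.
Qed.

Lemma shift4_0 (f : P) : shift4 0 0 0 0 f = f.
Proof.
rewrite shift4E -[RHS](comp_mpoly_id f); congr (_ \mPo _).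
apply: eq_from_tnth => i; rewrite tnth_map tnth_ord_tuple.
by case: (ord4_cases i) => ->; rewrite /stup (tnth_nth 0) inordK //= addr0.
Qed.

Lemma shift4_1 (a b c d : C) : shift4 a b c d 1 = 1.
Proof. by rewrite shift4E comp_mpoly1. Qed.


Definition Rel (f g : P) :=
  [/\ g != 0, (msize f <= msize g)%N & (msize (f - g) < msize g)%N].

Lemma msizeM_le' (f g : P) : (msize (f * g) <= (msize f + msize g).-1)%N.
Proof.
have [->|nf] := eqVneq f 0; first by rewrite mul0r msize0.
have [->|ng] := eqVneq g 0; first by rewrite mulr0 msize0.
by rewrite msizeM.
Qed.

Lemma msize_pos {g : P} : g != 0 -> (0 < msize g)%N.
Proof. by move=> ng; rewrite lt0n msize_poly_eq0. Qed.

Lemma Rel_mul f g f' g' : Rel f g -> Rel f' g' -> Rel (f * f') (g * g').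
Proof.
move=> [ng h1 h2] [ng' h1' h2'].
have p1 := msize_pos ng; have p2 := msize_pos ng'.
split; first by rewrite mulf_neq0.
  rewrite [msize (g * g')]msizeM //; apply: leq_trans (msizeM_le' _ _) _; rewrite -!subn1; apply: leq_sub2r; apply: leq_add; [exact h1 | exact h1'].
rewrite [msize (g * g')]msizeM //.
have -> : f * f' - g * g' = (f - g) * f' + g * (f' - g') by ring.
apply: leq_ltn_trans (msizeD_le _ _) _; rewrite gtn_max.
have ar : forall d F G G' : nat, (d < G -> F <= G' -> 0 < G -> 0 < G' ->
   (d + F).-1 < (G + G').-1)%N by move=> d F G G' *; rewrite -!subn1; lia.
apply/andP; split.
  by apply: leq_ltn_trans (msizeM_le' _ _) _; apply: ar.
apply: leq_ltn_trans (msizeM_le' _ _) _; rewrite addnC [(msize g + _)%N]addnC.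
by apply: ar => //; apply: ltnW.
Qed.

Lemma Rel_1 : Rel 1 1.
Proof. by split; rewrite ?oner_neq0 // subrr msize0 msize1. Qed.

Lemma Rel_exp f g k : Rel f g -> Rel (f ^+ k) (g ^+ k).
Proof.
move=> h; elim: k => [|k IH]; first by rewrite !expr0; exact: Rel_1.
by rewrite !exprS; apply: Rel_mul.
Qed.

Lemma msizeXi (i : 'I_4) : msize ('X_i : P) = 2%N.
Proof. by rewrite msizeX mdeg1. Qed.

Lemma Rel_base (i : 'I_4) (k : C) : Rel ('X_i + k%:MP) 'X_i.
Proof.
split.
- by rewrite -msize_poly_eq0 msizeXi.
- rewrite msizeXi; apply: leq_trans (msizeD_le _ _) _.
  by rewrite geq_max msizeXi msizeC; case: (k != 0).
- by rewrite addrC addKr msizeXi msizeC; case: (k != 0).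
Qed.

Lemma Rel_mono {lq : 4.-tuple P} {m : 'X_{1..4}} :
  (forall i, exists k, tnth lq i = 'X_i + k%:MP) ->
  Rel ('X_[m] \mPo lq) 'X_[m].
Proof.
move=> hq; rewrite comp_mpolyX [X in Rel _ X]mpolyXE_id.
apply: (big_ind2 Rel Rel_1 Rel_mul) => i _.
have [k ->] := hq i; exact/Rel_exp/Rel_base.
Qed.

Lemma msize_shift_lt {lq : 4.-tuple P} {f : P} :
  (forall i, exists k, tnth lq i = 'X_i + k%:MP) -> f != 0 ->
  (msize ((f \mPo lq) - f) < msize f)%N.
Proof.
move=> hq nf.
have -> : (f \mPo lq) - f = \sum_(m <- msupp f) (f@_m *: ('X_[m] \mPo lq - 'X_[m])).
  rewrite comp_mpolyEX {3}[f]mpolyE -sumrB; apply: eq_bigr => m _.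
  by rewrite scalerBr.
rewrite big_seq; apply: (big_ind (fun g => msize g < msize f)%N).
- by rewrite msize0 msize_pos.
- move=> x y hx hy; apply: leq_ltn_trans (msizeD_le _ _) _; by rewrite gtn_max hx hy.
move=> m hm; apply: leq_ltn_trans (msizeZ_le _ _) _.
have [_ _ h] := Rel_mono hq (m := m); rewrite msizeX in h.
by apply: leq_trans h _; apply: msize_mdeg_lt.
Qed.

Lemma shift_eigen (a b c d k : C) (f : P) :
  f != 0 -> shift4 a b c d f = k *: f -> k = 1.
Proof.
move=> nf hs; apply/eqP; apply/negPn/negP => hk.
have := msize_shift_lt (@stup_tnth a b c d) nf.
rewrite -shift4E hs -{2}[f]scale1r -scalerBl msizeZ ?subr_eq0 //.
by rewrite ltnn.
Qed.

End Aux.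
Lemma step {C : numClosedFieldType} {a b x y z w : C} {p : {mpoly C[4]}} :
  p != 0 -> b != 0 -> a *: p = b *: shift4 x y z w p ->
  a = b /\ shift4 x y z w p = p.
Proof.
move=> np nb h.
have hq : shift4 x y z w p = (b^-1 * a) *: p by rewrite -scalerA h scalerA mulVf // scale1r.
have := @shift_eigen C x y z w _ p np hq => e.
have ab : a = b by move/(congr1 (fun u => b * u)): e; rewrite mulrA mulfV // mul1r mulr1.
by split => //; rewrite hq e scale1r.
Qed.

Lemma eq_from {C : numClosedFieldType} {a b a' b' : {mpoly C[4]}} :
  a' = b' -> a - b = a' - b' -> a = b.
Proof. by move=> -> h; apply/eqP; rewrite -subr_eq0 h subrr. Qed.

Theorem theorem3p5 (C : numClosedFieldType)
  (l1 l2 l1' l2' s1 s2 s1' s2' e1 e2 e1' e2' : C) :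
  l1 != 0 -> l2 != 0 -> l1' != 0 -> l2' != 0 ->
  s1 != 0 -> s2 != 0 -> s1' != 0 -> s2' != 0 ->
  l1 != l2 -> l1' != l2' ->
  (gmod_iso (tens_act l1 e1 s1 l2 e2 s2) (tens_act l1' e1' s1' l2' e2' s2')
   <-> ((l1, e1, s1) = (l1', e1', s1') /\ (l2, e2, s2) = (l2', e2', s2'))).
Proof.
move=> nl1 nl2 nl1' nl2' ns1 ns2 ns1' ns2' l12 l12'; split; last first.
  move=> [h1 h2]; case: h1 => <- <- <-; case: h2 => <- <- <-.
  exists id; split => //.
  exact: (Bijective (g := id)).
case=> phi [Hlin Hbij Hint].
have phi0 : phi 0 = 0.
  have h := Hlin 1 0 0; rewrite scaler0 addr0 scale1r in h.
  by apply: (addrI (phi 0)); rewrite addr0 -h.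
have phiZ a u : phi (a *: u) = a *: phi u by rewrite -[a *: u]addr0 Hlin phi0 addr0.
have phiD (u v : Pol C) : phi (u + v) = phi u + phi v by rewrite -{1}[u]scale1r Hlin scale1r.
have phiN (u : Pol C) : phi (- u) = - phi u by rewrite -scaleN1r phiZ scaleN1r.
have phiB (u v : Pol C) : phi (u - v) = phi u - phi v by rewrite phiD phiN.
have phiC c : phi (c%:MP) = c *: phi 1 by rewrite -[c%:MP]mulr1 mul_mpolyC phiZ.
move: phiC; move Ep : (phi 1) => p phiC.
have np : p != 0.
  apply/eqP => h; have := bij_inj Hbij (x1 := 1) (x2 := 0).
  by rewrite phi0 Ep h => /(_ erefl) /eqP; rewrite oner_eq0.
have HI (k : nat) : (l1 ^+ k * s1) *: p = (l1' ^+ k * s1') *: shift4 (-1) (- k%:R) 0 0 p.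
  have := Hint (gI k) 1; rewrite /= shift4_1 !addr0 phiZ Ep; exact.
have HJ (k : nat) : (l2 ^+ k * s2) *: p = (l2' ^+ k * s2') *: shift4 0 0 1 (- k%:R) p.
  have := Hint (gJ k) 1; rewrite /= shift4_1 !add0r phiZ Ep; exact.
have [es1 HX0] : s1 = s1' /\ shift4 (-1) 0 0 0 p = p.
  by have := HI 0%N; rewrite !expr0 !mul1r oppr0; apply: step.
subst s1'.
have [el1 _] : l1 * s1 = l1' * s1 /\ shift4 (-1) (-1) 0 0 p = p.
  by have := HI 1%N; rewrite !expr1; apply: step; rewrite // mulf_neq0.
have {el1} el1 : l1 = l1' by apply: (mulIf ns1).
subst l1'.
have [es2 HS0] : s2 = s2' /\ shift4 0 0 1 0 p = p.
  by have := HJ 0%N; rewrite !expr0 !mul1r oppr0; apply: step.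
subst s2'.
have [el2 _] : l2 * s2 = l2' * s2 /\ shift4 0 0 1 (-1) p = p.
  by have := HJ 1%N; rewrite !expr1; apply: step; rewrite // mulf_neq0.
have {el2} el2 : l2 = l2' by apply: (mulIf ns2).
subst l2'.
have eY (k : nat) : shift4 0 (- k%:R) 0 0 p = p.
  have [_ h] := step np (mulf_neq0 (expf_neq0 k nl1) ns1) (HI k).
  have f1 : shift4 1 0 0 0 p = p.
    by rewrite -{1}HX0 shift4_comp subrr !addr0 shift4_0.
  by have := congr1 (shift4 1 0 0 0) h; rewrite shift4_comp f1 subrr !add0r.
have eT (k : nat) : shift4 0 0 0 (- k%:R) p = p.
  have [_ h] := step np (mulf_neq0 (expf_neq0 k nl2) ns2) (HJ k).
  have f1 : shift4 0 0 (-1) 0 p = p.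
    by rewrite -{1}HS0 shift4_comp addNr !addr0 shift4_0.
  by have := congr1 (shift4 0 0 (-1) 0) h; rewrite shift4_comp f1 addNr !add0r.
have HH (k : nat) : l1 ^+ k *: phi (vX C) + l2 ^+ k *: phi (vS C) =
    l1 ^+ k *: (vX C * p) + l2 ^+ k *: (vS C * p).
  have := Hint (gH k) 1; rewrite /= !shift4_1 !mulr1 phiD !phiZ.
  have eY' : shift4 0 (- (k:int)%:~R) 0 0 p = p by exact: eY k.
  have eT' : shift4 0 0 0 (- (k:int)%:~R) p = p by exact: eT k.
  rewrite Ep eY' eT'; exact.
have HH0 := HH 0%N; have HH1 := HH 1%N; rewrite !expr0 !scale1r in HH0.
rewrite !expr1 in HH1.
have hS : (l2 - l1) *: (phi (vS C) - vS C * p) = 0.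
  transitivity ((l1 *: phi (vX C) + l2 *: phi (vS C)) - (l1 *: (vX C * p) + l2 *: (vS C * p))
     - l1 *: ((phi (vX C) + phi (vS C)) - (vX C * p + vS C * p))).
    by rewrite -!mul_mpolyC mpolyCB; ring.
  by rewrite HH1 HH0 !subrr scaler0 subrr.
have phiS : phi (vS C) = vS C * p.
  by move/eqP: hS; rewrite scaler_eq0 subr_eq0 eq_sym (negbTE l12) /= subr_eq0 => /eqP.
have phiX : phi (vX C) = vX C * p.
  by move: HH0; rewrite phiS => /addIr.
have [y Ey] : exists y, phi (vY C) = y + vY C * p by exists (phi (vY C) - vY C * p); rewrite subrK.
have [t Et] : exists t, phi (vT C) = t + vT C * p by exists (phi (vT C) - vT C * p); rewrite subrK.
have HL (k : nat) : l1 ^+ k *: y + l2 ^+ k *: t =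
    (k%:R * (l1 ^+ k * (e1' - e1) + l2 ^+ k * (e2' - e2))) *: p.
  have := Hint (gL k) 1; rewrite /= !shift4_1 !mulr1 !(phiD, phiN, phiZ, phiC).
  have eY' : shift4 0 (- (k:int)%:~R) 0 0 p = p by exact: eY k.
  have eT' : shift4 0 0 0 (- (k:int)%:~R) p = p by exact: eT k.
  rewrite scale1r eY' eT' phiX phiS Ey Et.
  have -> : (k:int)%:~R = k%:R :> C by [].
  have -> : l1 ^ (k:int) = l1 ^+ k by [].
  have -> : l2 ^ (k:int) = l2 ^+ k by [].
  move=> h; refine (eq_from h _).
  rewrite -!mul_mpolyC !(mpolyCD, mpolyCM, mpolyCB, mpolyCN); ring.
have canc (a b : C) : a *: p = b *: p -> a = b.
  move/eqP; rewrite -subr_eq0 -scalerBl scaler_eq0 (negbTE np) orbF subr_eq0.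
  by move/eqP.
have Ht : t = - y.
  by have := HL 0%N; rewrite !expr0 !scale1r mul0r scale0r => /eqP; rewrite addrC addr_eq0 => /eqP.
have nl : l1 - l2 != 0 by rewrite subr_eq0.
set c1 := (1%:R * (l1 ^+ 1 * (e1' - e1) + l2 ^+ 1 * (e2' - e2))).
have Hy : y = ((l1 - l2)^-1 * c1) *: p.
  have := HL 1%N; rewrite Ht -/c1 => h.
  by rewrite -scalerA -h scalerN -scalerBl !expr1 scalerA mulVf // scale1r.
move: Hy; set kk := (l1 - l2)^-1 * c1 => Hy.
have HK (k : nat) : (l1 ^+ k - l2 ^+ k) * kk =
    k%:R * (l1 ^+ k * (e1' - e1) + l2 ^+ k * (e2' - e2)).
  apply: canc; rewrite -HL Ht Hy scalerN -scaleNr -scalerDl scalerA; congr (_ *: _).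
have HK1 : (l1 - l2) * kk = c1 by rewrite /c1 -HK !expr1.
have HK2 := HK 2%N; have HK3 := HK 3%N.
have G2 : (l1 - l2) * (l2 * (e2' - e2) - l1 * (e1' - e1)) = 0.
  have -> : (l1 - l2) * (l2 * (e2' - e2) - l1 * (e1' - e1)) =
     (l1 + l2) * c1 - 2%:R * (l1 ^+ 2 * (e1' - e1) + l2 ^+ 2 * (e2' - e2)) by rewrite /c1; ring.
  by rewrite -HK1 -HK2; ring.
move/eqP: G2; rewrite mulf_eq0 (negbTE nl) /= => /eqP G2.
have G3 : (l1 - l2) ^+ 2 * (l1 * (e1' - e1)) = 0.
  have -> : (l1 - l2) ^+ 2 * (l1 * (e1' - e1)) =
     3%:R * (l1 ^+ 3 * (e1' - e1) + l2 ^+ 3 * (e2' - e2)) - (l1 ^+ 2 + l1 * l2 + l2 ^+ 2) * c1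
     + (l1 - l2) * (l1 + 2%:R * l2) * (l2 * (e2' - e2) - l1 * (e1' - e1)) by rewrite /c1; ring.
  by rewrite G2 mulr0 addr0 -HK1 -HK3; ring.
move/eqP: G3; rewrite mulf_eq0 expf_eq0 (negbTE nl) andbF /= mulf_eq0 (negbTE nl1) /= subr_eq0.
move/eqP => E1; move: G2; rewrite E1 subrr mulr0 subr0 => /eqP.
rewrite mulf_eq0 (negbTE nl2) /= subr_eq0 => /eqP E2.
by rewrite E2.
Qed.
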